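(* Let $A$ ($m_a\times n_a$) and $B$ ($m_b\times n_b$) be Hamming parity check matrices over $\mathbb{F}_q$ with $n_a=(q^{m_a}-1)/(q-1)\ge3$, $n_b=(q^{m_b}-1)/(q-1)\ge3$, and let $C=\{{\bf x}\in\mathbb{F}_q^{n_an_b}:(A\otimes B){\bf x}^t={\bf 0}\}$. Then for every ${\bf v}\in\mathbb{F}_q^{n_an_b}$, the Hamming distance from ${\bf v}$ to $C$ equals $\mathrm{rank}(B\,V_{\bf v}\,A^t)$ (equivalently, the rank of the main submatrix representation $M_{\bf v}$ when $A,B$ are normalized to have the standard basis vectors as their first columns).
   Context: A Hamming parity check matrix of size $m\times n$ over $\mathbb{F}_q$, $n=(q^m-1)/(q-1)$, has as columns one nonzero representative of each one-dimensional subspace of $\mathbb{F}_q^m$. $A\otimes B$ is the Kronecker product (each entry $a_{r,s}$ of $A$ replaced by the block $a_{r,s}B$). For ${\bf x}\in\mathbb{F}_q^{n_an_b}$, $V_{\bf x}$ is the $n_b\times n_a$ matrix with $(V_{\bf x})_{i,j}=x_{(j-1)n_b+i}$, so that $(A\otimes B){\bf x}^t={\bf 0}$ iff $BV_{\bf x}A^t=0$. $d({\bf v},C)=\min_{{\bf c}\in C}\mathrm{wt}({\bf v}-{\bf c})$ with $\mathrm{wt}$ the Hamming weight. *)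

(* Defs.v *)
From HB Require Import structures.
From mathcomp Require Import all_boot all_order all_algebra all_field.
Set Implicit Arguments. Unset Strict Implicit. Unset Printing Implicit Defensive.
Import GRing.Theory.
Local Open Scope ring_scope.

Lemma kidx_hi_proof m n (k : 'I_(m * n)) : (k %/ n < m)%N.
Proof.
case: n k => [|n] k; first by case: k => i; rewrite muln0.
by rewrite ltn_divLR // ltn_ord.
Qed.
Lemma kidx_lo_proof m n (k : 'I_(m * n)) : (k %% n < n)%N.
Proof.
case: n k => [|n] k; first by case: k => i; rewrite muln0.
by rewrite ltn_pmod.
Qed.
Definition kidx_hi m n (k : 'I_(m * n)) : 'I_m := Ordinal (kidx_hi_proof k).
Definition kidx_lo m n (k : 'I_(m * n)) : 'I_n := Ordinal (kidx_lo_proof k).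

(* Kronecker product A (x) B: entry (r*mb + r', s*nb + s') is a_{r,s} b_{r',s'}
   (0-based; i.e. each a_{r,s} replaced by the block a_{r,s} B). *)
Definition kron (R : pzRingType) ma na mb nb
  (A : 'M[R]_(ma, na)) (B : 'M[R]_(mb, nb)) : 'M[R]_(ma * mb, na * nb) :=
  \matrix_(k, l) (A (kidx_hi k) (kidx_hi l) * B (kidx_lo k) (kidx_lo l)).

(* V_x : the nb x na matrix with (V_x)_{i,j} = x_{j*nb + i} (0-based). *)
Definition Vmat (R : pzRingType) na nb (x : 'rV[R]_(na * nb)) : 'M[R]_(nb, na) :=
  \matrix_(i, j) x 0 (mxvec_index j i).

(* Hamming parity check matrix: every column is nonzero and every nonzero
   vector of F^m is a scalar multiple of exactly one column, i.e. the
   columns are one nonzero representative of each 1-dim subspace. *)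
Definition hamming_pcm (F : fieldType) m n (H : 'M[F]_(m, n)) : Prop :=
  (forall j, col j H != 0) /\
  (forall x : 'cV[F]_m, x != 0 -> exists! j, exists c : F, x = c *: col j H).

Definition wt (R : nmodType) n (x : 'rV[R]_n) : nat := #|[set j | x 0 j != 0]|.

Definition dist (F : finFieldType) n (v : 'rV[F]_n) (C : pred 'rV[F]_n) : nat :=
  \big[minn/n]_(c : 'rV[F]_n | C c) wt (v - c).

Definition kron_code (F : finFieldType) ma na mb nb
  (A : 'M[F]_(ma, na)) (B : 'M[F]_(mb, nb)) : pred 'rV[F]_(na * nb) :=
  fun x => kron A B *m x^T == 0.

(* Main.v *)
Require Import Defs.
From HB Require Import structures.
From mathcomp Require Import all_boot all_order all_algebra all_field.
Import GRing.Theory.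
Local Open Scope ring_scope.
Lemma val_enum_rank (T : finType) (x : T) : val (enum_rank x) = index x (enum T).
Proof. rewrite /enum_rank enum_rank_in.unlock insubdK //. by rewrite unfold_in /= cardE index_mem mem_enum. Qed.
Lemma enum_prod_ord m n : enum {: 'I_m * 'I_n} = [seq (x1, x2) | x1 <- enum 'I_m, x2 <- enum 'I_n].
Proof. by rewrite enumT unlock. Qed.
Lemma index_allpairs (T1 T2 : eqType) (s1 : seq T1) (s2 : seq T2) x1 x2 :
  x1 \in s1 -> x2 \in s2 ->
  index (x1, x2) [seq (y1, y2) | y1 <- s1, y2 <- s2] = (index x1 s1 * size s2 + index x2 s2)%N.
Proof.
elim: s1 => //= y s1 IH; rewrite in_cons => Hx Hx2.
rewrite index_cat.
have inj : injective (@pair T1 T2 y) := fun a b E => congr1 snd E.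
case: (eqVneq y x1) => [<-|ne].
  by rewrite (mem_map inj) Hx2 index_map.
have -> : ((x1, x2) \in [seq (y, y2) | y2 <- s2]) = false.
  by apply/negbTE/mapP => -[z _ [E _]]; rewrite E eqxx in ne.
rewrite size_map IH; last 2 first.
- by move: Hx; rewrite eq_sym (negbTE ne).
- by [].
by rewrite mulSn addnA.
Qed.
Lemma val_mxvec_index m n (i : 'I_m) (j : 'I_n) : val (mxvec_index i j) = (i * n + j)%N.
Proof.
rewrite /mxvec_index /= val_enum_rank enum_prod_ord index_allpairs ?mem_enum //.
by rewrite !index_enum_ord size_enum_ord.
Qed.
Lemma kidx_hi_mx m n (i : 'I_m) (j : 'I_n) : kidx_hi (mxvec_index i j) = i.
Proof.
apply: val_inj; change ((val (mxvec_index i j)) %/ n = i)%N; rewrite val_mxvec_index divnMDl ?divn_small ?addn0 //.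
by case: j => j /= Hj; apply: leq_ltn_trans Hj.
Qed.
Lemma kidx_lo_mx m n (i : 'I_m) (j : 'I_n) : kidx_lo (mxvec_index i j) = j.
Proof.
apply: val_inj; change ((val (mxvec_index i j)) %% n = j)%N; rewrite val_mxvec_index modnMDl ?modn_small //.
Qed.
Lemma kron_mul (F : fieldType) ma na mb nb (A : 'M[F]_(ma, na)) (B : 'M[F]_(mb, nb))
  (x : 'rV[F]_(na * nb)) :
  kron A B *m x^T = (mxvec (B *m Vmat x *m A^T)^T)^T.
Proof.
apply/colP => k; case/mxvec_indexP: k => r r'.
rewrite !mxE mxvecE !mxE.
rewrite (reindex (uncurry (@mxvec_index na nb))) /=; last first.
  by case: (curry_mxvec_bij na nb) => g H1 H2; exists g => z _; [apply: H1|apply: H2].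
rewrite (eq_bigr (fun p => kron A B (mxvec_index r r') (mxvec_index p.1 p.2) * x^T (mxvec_index p.1 p.2) 0)); last by case. rewrite -(pair_bigA _ (fun s s2 => kron A B (mxvec_index r r') (mxvec_index s s2) * x^T (mxvec_index s s2) 0)) /=. apply: eq_bigr => s _.
rewrite !mxE mulr_suml; apply: eq_bigr => s' _.
rewrite !mxE !kidx_hi_mx !kidx_lo_mx.
by rewrite [RHS]mulrC mulrA.
Qed.

Lemma Vmat_vec (R : pzRingType) na nb (x : 'rV[R]_(na * nb)) : Vmat x = (vec_mx x)^T.
Proof. by apply/matrixP => i j; rewrite !mxE. Qed.

Lemma VmatB (R : pzRingType) na nb (x y : 'rV[R]_(na * nb)) : Vmat (x - y) = Vmat x - Vmat y.
Proof. by rewrite !Vmat_vec !linearB. Qed.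

Lemma kron_codeP (F : finFieldType) ma na mb nb (A : 'M[F]_(ma, na)) (B : 'M[F]_(mb, nb))
  (x : 'rV[F]_(na * nb)) : kron_code A B x <-> B *m Vmat x *m A^T = 0.
Proof.
rewrite /kron_code kron_mul; split.
  move/eqP => H; apply: trmx_inj; apply: (can_inj (@mxvecK _ _ _)).
  by rewrite -[LHS]trmxK H !linear0.
by move=> ->; rewrite !linear0.
Qed.

Lemma rank_sum_le (F : fieldType) (I : finType) (P : pred I) m n (M : I -> 'M[F]_(m, n)) :
  (\rank (\sum_(i | P i) M i)%R <= \sum_(i | P i) \rank (M i))%N.
Proof.
apply: (big_ind2 (fun (X : 'M[F]_(m, n)) (k : nat) => (\rank X <= k)%N)) => //.
- by rewrite mxrank0.
- by move=> X1 k1 X2 k2 H1 H2; apply: leq_trans (mxrank_add _ _) (leq_add H1 H2).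
Qed.

Lemma rank_le_wt (F : fieldType) na nb (w : 'rV[F]_(na * nb)) :
  (\rank (Vmat w) <= wt w)%N.
Proof.
pose S := [set l | w 0 l != 0].
have Ew : w = \sum_(l in S) w 0 l *: delta_mx 0 l.
  apply/rowP => l; rewrite summxE big_mkcond (bigD1 l) //=.
  rewrite big1 ?addr0; last first.
    by move=> k nk; case: ifP => // _; rewrite !mxE eq_sym (negbTE nk) mulr0.
  rewrite !mxE !eqxx mulr1; case: ifP => //; rewrite inE => /negbFE/eqP ->.
  by [].
rewrite {1}Ew Vmat_vec !linear_sum /=.
apply: (leq_trans (@rank_sum_le F _ (mem S) _ _ (fun i => (vec_mx (w 0 i *: delta_mx 0 i))^T))).
rewrite /wt -/S -sum1_card; apply: leq_sum => l _.
rewrite !linearZ /=; apply: leq_trans (mxrank_scale _ _) _.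
by case/mxvec_indexP: l => i j; rewrite vec_mx_delta mxrank_tr mxrank_delta.
Qed.

Lemma bigmin_le (I : eqType) (s : seq I) (P : pred I) (G : I -> nat) n i :
  i \in s -> P i -> (\big[minn/n]_(j <- s | P j) G j <= G i)%N.
Proof.
elim: s => //= j s IH; rewrite in_cons big_cons => /orP[/eqP<-|/IH H] Pi.
  by rewrite Pi geq_minl.
by case: (P j); [apply: leq_trans (geq_minr _ _) (H Pi)|apply: H].
Qed.

Lemma mulmx_colrow (F : fieldType) m n p (X : 'M[F]_(m, n)) (Y : 'M[F]_(n, p)) :
  X *m Y = \sum_(k < n) col k X *m row k Y.
Proof.
apply/matrixP => i j; rewrite !mxE summxE; apply: eq_bigr => k _.
by rewrite !mxE big_ord1 !mxE.
Qed.

Theorem mainTheorem4 (F : finFieldType) (ma na mb nb : nat)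
  (A : 'M[F]_(ma, na)) (B : 'M[F]_(mb, nb)) :
  hamming_pcm A -> hamming_pcm B ->
  na = ((#|F| ^ ma).-1 %/ (#|F|).-1)%N -> (3 <= na)%N ->
  nb = ((#|F| ^ mb).-1 %/ (#|F|).-1)%N -> (3 <= nb)%N ->
  forall v : 'rV[F]_(na * nb),
    dist v (kron_code A B) = \rank (B *m Vmat v *m A^T).
Proof.
move=> [_ HA] [_ HB] _ Hna _ Hnb v.
have na0 : (0 < na)%N by apply: leq_trans Hna.
have nb0 : (0 < nb)%N by apply: leq_trans Hnb.
set S := B *m Vmat v *m A^T.
have lower : forall c, kron_code A B c -> (\rank S <= wt (v - c))%N.
  move=> c /kron_codeP Hc.
  have -> : S = B *m Vmat (v - c) *m A^T by rewrite VmatB mulmxBr mulmxBl Hc subr0.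
  apply: leq_trans (mxrankM_maxl _ _) _.
  apply: leq_trans (mxrankM_maxr _ _) _.
  exact: rank_le_wt.
apply/eqP; rewrite eqn_leq; apply/andP; split; last first.
  apply: (big_ind (fun x => \rank S <= x)%N).
  - have := lower 0; rewrite subr0 => H.
    apply: leq_trans (H _) _; first by apply/kron_codeP; rewrite Vmat_vec !linear0 mul0mx.
    by rewrite /wt; apply: leq_trans (max_card _) _; rewrite card_ord.
  - by move=> x y Hx Hy; rewrite leq_min Hx Hy.
  - exact: lower.
pose r := \rank S.
pose cb := col_base S; pose rb := row_base S.
have Hk : forall k : 'I_r, exists p : 'I_nb * 'I_na * F,
    B *m (p.2 *: delta_mx p.1.1 p.1.2) *m A^T = col k cb *m row k rb.
  move=> k.
  pose j0 := Ordinal nb0; pose i0 := Ordinal na0.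
  have Hz : B *m (0 *: delta_mx j0 i0) *m A^T = 0 by rewrite scale0r mulmx0 mul0mx.
  case: (eqVneq (col k cb) 0) => [->|nu].
    by exists (j0, i0, 0); rewrite Hz mul0mx.
  case: (eqVneq (row k rb)^T 0) => [E|nt].
    exists (j0, i0, 0); rewrite Hz.
    have E2 : row k rb = 0 by rewrite -[row k rb]trmxK E linear0.
    by rewrite E2 mulmx0.
  have [j [[c Ec] _]] := HB _ nu.
  have [i [[d Ed] _]] := HA _ nt.
  exists (j, i, c * d) => /=.
  have -> : row k rb = d *: row i A^T by rewrite -[row k rb]trmxK Ed linearZ /= tr_col.
  rewrite Ec -scalemxAl -scalemxAr -scalemxAr scalerA -scalemxAl; congr (_ *: _).
  by rewrite -(mul_delta_mx (0 : 'I_1)) !mulmxA -colE -mulmxA -rowE.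
have /fin_all_exists [f Hf] := Hk.
pose W := \sum_k (f k).2 *: delta_mx (f k).1.1 (f k).1.2.
have HW : B *m W *m A^T = S.
  rewrite mulmx_sumr mulmx_suml.
  rewrite -[RHS](mulmx_base S) mulmx_colrow.
  by apply: eq_bigr => k _; rewrite Hf.
pose w := mxvec W^T.
have Vw : Vmat w = W by rewrite Vmat_vec mxvecK trmxK.
have Cc : kron_code A B (v - w).
  by apply/kron_codeP; rewrite VmatB mulmxBr mulmxBl Vw HW subrr.
rewrite /dist; apply: (leq_trans (@bigmin_le _ _ _ _ _ _ (mem_index_enum (v - w)) Cc)).
rewrite opprB addrC subrK /wt.
pose Im := [set mxvec_index (f k).1.2 (f k).1.1 | k : 'I_r].
apply: leq_trans (subset_leq_card (_ : _ \subset Im)) _; last first.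
  by apply: leq_trans (leq_imset_card _ _) _; rewrite card_ord.
apply/subsetP => l; rewrite inE; case/mxvec_indexP: l => i j.
apply: contraR => Hn; apply/eqP.
rewrite mxvecE mxE summxE big1 // => k _.
rewrite !mxE; case: (eqVneq j (f k).1.1) => [Ej|]; last by rewrite mulr0.
case: (eqVneq i (f k).1.2) => [Ei|]; last by rewrite mulr0.
by case/negP: Hn; apply/imsetP; exists k => //; rewrite Ei Ej.
Qed.
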